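(* Let $M$ be a $C^2$ manifold with a Koszul connection $\nabla$ (on $TM$, extended to tensor fields by the Leibniz rule), and let $A$ be a $C^2$ covariant symmetric tensor field on $M$ of some rank that vanishes at no point of $M$. If $\nabla\big(\mathrm{Sym}(A\otimes A)\big)=0$ everywhere on $M$, then $\nabla A=0$ everywhere on $M$.
   Context: $\mathrm{Sym}$ denotes symmetrization of covariant tensors: $\mathrm{Sym}(C)=\frac1{k!}\sum_{\sigma\in P(k)}\sigma(C)$ with $(\sigma C)(v_1,\dots,v_k)=C(v_{\sigma(1)},\dots,v_{\sigma(k)})$. *)

(* Defs.v *)
From HB Require Import structures.
From mathcomp Require Import all_boot all_order all_algebra all_fingroup.
From mathcomp Require Import all_classical all_reals all_analysis.
Set Implicit Arguments. Unset Strict Implicit. Unset Printing Implicit Defensive.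
Import Order.TTheory GRing.Theory Num.Theory.
Import numFieldNormedType.Exports.
Local Open Scope classical_set_scope.
Local Open Scope ring_scope.

Section Coord.
Variables (R : realType) (n : nat).

Definition ev (j : 'I_n) : 'rV[R]_n := delta_mx 0 j.

Definition partial (f : 'rV[R]_n -> R) (j : 'I_n) : 'rV[R]_n -> R :=
  fun x => derive f x (ev j).

(* f is C^2 on the set U: f and all partial derivatives of order <= 2
   exist and are continuous at every point of U (U will always be open). *)
Definition C2_on (U : set 'rV[R]_n) (f : 'rV[R]_n -> R) : Prop :=
  forall x, U x ->
  [/\ {for x, continuous f},
      forall j, derivable f x (ev j) /\ {for x, continuous (partial f j)}
    & forall j l, derivable (partial f j) x (ev l) /\
                  {for x, continuous (partial (partial f j) l)}].

Definition compo (g : 'rV[R]_n -> 'rV[R]_n) (c : 'I_n) : 'rV[R]_n -> R :=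
  fun x => g x 0 c.

End Coord.

Section Manifold.
Variables (R : realType) (M : topologicalType) (n : nat) (I : Type).
Variables (dom : I -> set M) (phi : I -> M -> 'rV[R]_n) (psi : I -> 'rV[R]_n -> M).

Definition cimg (i : I) : set 'rV[R]_n := phi i @` dom i.

Definition overlap (i j : I) : set 'rV[R]_n := phi i @` (dom i `&` dom j).

Definition trans (i j : I) : 'rV[R]_n -> 'rV[R]_n := phi j \o psi i.

Definition C2_atlas : Prop :=
  [/\ forall p : M, exists i, dom i p,
      forall i, open (dom i) /\ open (cimg i),
      forall i p, dom i p -> psi i (phi i p) = p /\ {for p, continuous (phi i)},
      forall i, {within cimg i, continuous (psi i)}
    & forall i j c, C2_on (overlap i j) (compo (trans i j) c)].

Definition jac (i j : I) (x : 'rV[R]_n) (c a : 'I_n) : R :=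
  partial (compo (trans i j) c) a x.

(* A Koszul connection on TM, given (as it literally unfolds in a chart) by
   its Christoffel symbols: Gam i x m a b = Gamma^m_{ab} at the point with
   chart-i coordinates x, i.e.  nabla_{d_a} d_b = sum_m Gamma^m_{ab} d_m. *)
Definition koszul_connection (Gam : I -> 'rV[R]_n -> 'I_n -> 'I_n -> 'I_n -> R)
  : Prop :=
  (forall i m a b x, cimg i x -> {for x, continuous (fun y => Gam i y m a b)}) /\
  (forall i j x, overlap i j x -> forall c a b,
     \sum_(m < n) Gam i x m a b * jac i j x c m =
     partial (partial (compo (trans i j) c) b) a x +
     \sum_(d < n) \sum_(e < n)
        Gam j (trans i j x) c d e * jac i j x d a * jac i j x e b).

(* Components of a covariant tensor field of rank r: in chart i, at the
   point with coordinates x, T i x a = T(d_{a 0}, ..., d_{a (r-1)}). *)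
Definition covtensor_field (r : nat) (T : I -> 'rV[R]_n -> {ffun 'I_r -> 'I_n} -> R)
  : Prop :=
  forall i j x, overlap i j x -> forall a : {ffun 'I_r -> 'I_n},
    T i x a = \sum_(b : {ffun 'I_r -> 'I_n})
                T j (trans i j x) b * \prod_(l < r) jac i j x (b l) (a l).

Definition C2_field (r : nat) (T : I -> 'rV[R]_n -> {ffun 'I_r -> 'I_n} -> R) : Prop :=
  forall i a, C2_on (cimg i) (fun x => T i x a).

Definition symmetric_field (r : nat) (T : I -> 'rV[R]_n -> {ffun 'I_r -> 'I_n} -> R)
  : Prop :=
  forall i x, cimg i x -> forall (s : 'S_r) (a : {ffun 'I_r -> 'I_n}),
    T i x [ffun t => a (s t)] = T i x a.

Definition nowhere_zero (r : nat) (T : I -> 'rV[R]_n -> {ffun 'I_r -> 'I_n} -> R)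
  : Prop :=
  forall i p, dom i p -> exists a, T i (phi i p) a <> 0.

End Manifold.

Section TensorOps.
Variables (R : realType) (n : nat) (I : Type).

Definition tprod (r q : nat) (S : I -> 'rV[R]_n -> {ffun 'I_r -> 'I_n} -> R)
  (T : I -> 'rV[R]_n -> {ffun 'I_q -> 'I_n} -> R)
  : I -> 'rV[R]_n -> {ffun 'I_(r + q) -> 'I_n} -> R :=
  fun i x c => S i x [ffun t => c (lshift q t)] * T i x [ffun t => c (rshift r t)].

Definition Symm (r : nat) (C : I -> 'rV[R]_n -> {ffun 'I_r -> 'I_n} -> R)
  : I -> 'rV[R]_n -> {ffun 'I_r -> 'I_n} -> R :=
  fun i x c => (r`!%:R)^-1 * \sum_(s : 'S_r) C i x [ffun t => c (s t)].

(* components of nabla T (rank r+1, derivative index first):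
   (nabla T)_{j a} = d_j T_a - sum_l sum_m Gamma^m_{j a_l} T_{a[l := m]},
   the Leibniz-rule extension of the connection to covariant tensors. *)
Definition nabla (Gam : I -> 'rV[R]_n -> 'I_n -> 'I_n -> 'I_n -> R)
  (r : nat) (T : I -> 'rV[R]_n -> {ffun 'I_r -> 'I_n} -> R)
  (i : I) (x : 'rV[R]_n) (j : 'I_n) (a : {ffun 'I_r -> 'I_n}) : R :=
  partial (fun y => T i y a) j x -
  \sum_(l < r) \sum_(m < n)
      Gam i x m j (a l) * T i x [ffun t => if t == l then m else a t].

End TensorOps.

(* Main.v *)
Require Import Defs.
From HB Require Import structures.
From mathcomp Require Import all_boot all_order all_algebra all_fingroup.
From mathcomp Require Import all_classical all_reals all_analysis.
Import Order.TTheory GRing.Theory Num.Theory.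
Local Open Scope classical_set_scope.
Local Open Scope ring_scope.
From mathcomp Require Import ring.
From mathcomp Require mpoly.
Import (coercions, canonicals) mpoly.
Import mpoly(fun_of_multinom, mpolyX, mcoeffX, mpolyXD, mcoeffZ, mnmE, mnmP, mcoeff).
Set Implicit Arguments. Unset Strict Implicit. Unset Printing Implicit Defensive.

Section Alg.
Variables (R : numFieldType) (n : nat).

Definition fcomp r (c : {ffun 'I_r -> 'I_n}) (s : 'S_r) : {ffun 'I_r -> 'I_n} :=
  [ffun t => c (s t)].

Definition mono r (a : {ffun 'I_r -> 'I_n}) : mpoly.multinom n :=
  mpoly.Multinom [tuple (\sum_(t < r) (a t == i))%N | i < n].

Lemma monoE r (a : {ffun 'I_r -> 'I_n}) i :
  mpoly.fun_of_multinom (mono a) i = (\sum_(t < r) (a t == i))%N.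
Proof. by rewrite /mono mnmE. Qed.

Lemma count_tuple r (a : {ffun 'I_r -> 'I_n}) i :
  count_mem i [tuple a t | t < r] = (\sum_(t < r) (a t == i))%N.
Proof.
rewrite /= count_map -sum1_count big_mkcond /=.
rewrite (perm_big (index_enum 'I_r)) /=.
  by apply: eq_bigr => t _; rewrite eq_sym; case: (i == a t).
apply: uniq_perm; rewrite ?ord_enum_uniq ?index_enum_uniq ?enum_uniq // => t.
by rewrite mem_enum mem_index_enum.
Qed.

Lemma mono_perm r (a b : {ffun 'I_r -> 'I_n}) :
  mono a = mono b -> exists s : 'S_r, b = fcomp a s.
Proof.
move=> e.
have : perm_eq [tuple b t | t < r] [tuple a t | t < r].
  rewrite /perm_eq; apply/allP => x _ /=; apply/eqP.
  by rewrite !count_tuple -!monoE e.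
case/tuple_permP => s hs.
exists s; apply/ffunP => t; rewrite ffunE.
have := congr1 (fun u => tnth u t) (val_inj hs).
by rewrite !tnth_mktuple.
Qed.

Definition Pol r (f : {ffun 'I_r -> 'I_n} -> R) : mpoly.mpoly n R :=
  \sum_a f a *: mpolyX R (mono a).

Lemma mono_fcomp r (a : {ffun 'I_r -> 'I_n}) s : mono (fcomp a s) = mono a.
Proof.
apply/mnmP => i; rewrite !monoE.
rewrite [RHS](reindex_inj (@perm_inj _ s)) /=.
by apply: eq_bigr => t _; rewrite ffunE.
Qed.

Lemma fcomp_inj r (s : 'S_r) : injective (fun c => fcomp c s).
Proof.
move=> c d /ffunP e; apply/ffunP => t.
have := e ((s^-1)%g t); rewrite !ffunE permKV //.
Qed.

Lemma Pol_sym r (h : {ffun 'I_r -> 'I_n} -> R) :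
  Pol (fun c => \sum_(s : 'S_r) h (fcomp c s)) = Pol h *+ #|{perm 'I_r}|.
Proof.
rewrite /Pol.
under eq_bigr do rewrite scaler_suml.
rewrite exchange_big /= -sumr_const; apply: eq_bigr => s _.
rewrite [RHS](reindex_inj (@fcomp_inj r s)) /=.
by apply: eq_bigr => c _; rewrite mono_fcomp.
Qed.

Lemma Pol_inj r (f : {ffun 'I_r -> 'I_n} -> R) :
  (forall a s, f (fcomp a s) = f a) -> Pol f = 0 -> forall a, f a = 0.
Proof.
move=> fs P0 a.
have := congr1 (mcoeff (mono a)) P0.
rewrite /Pol raddf_sum /= raddf0.
have -> : \sum_b mcoeff (mono a) (f b *: mpolyX R (mono b))
     = f a * \sum_(b : {ffun 'I_r -> 'I_n}) (mono b == mono a)%:R.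
  rewrite mulr_sumr; apply: eq_bigr => b _; rewrite mcoeffZ mcoeffX.
  case: eqP => [/esym|]; last by rewrite !mulr0.
  by case/mono_perm => s ->; rewrite fs.
move/eqP; rewrite mulf_eq0 => /orP[/eqP //|].
rewrite (bigD1 a) //= eqxx -natr_sum -natrD pnatr_eq0.
by rewrite add1n.
Qed.

Definition Lf k q (b : {ffun 'I_(k + q) -> 'I_n}) : {ffun 'I_k -> 'I_n} :=
  [ffun t => b (lshift q t)].
Definition Rf k q (b : {ffun 'I_(k + q) -> 'I_n}) : {ffun 'I_q -> 'I_n} :=
  [ffun t => b (rshift k t)].
Definition glue k q (p : {ffun 'I_k -> 'I_n} * {ffun 'I_q -> 'I_n}) :
  {ffun 'I_(k + q) -> 'I_n} :=
  [ffun t => match fintype.split t with inl u => p.1 u | inr u => p.2 u end].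

Lemma split_l k q (u : 'I_k) : fintype.split (lshift q u) = inl u.
Proof. exact: (@unsplitK k q (inl u)). Qed.
Lemma split_r k q (u : 'I_q) : fintype.split (rshift k u) = inr u.
Proof. exact: (@unsplitK k q (inr u)). Qed.

Lemma Lf_glue k q p : Lf (@glue k q p) = p.1.
Proof. by apply/ffunP => u; rewrite !ffunE split_l. Qed.
Lemma Rf_glue k q p : Rf (@glue k q p) = p.2.
Proof. by apply/ffunP => u; rewrite !ffunE split_r. Qed.
Lemma glueK k q b : glue (Lf b, Rf b) = b :> {ffun 'I_(k + q) -> 'I_n}.
Proof.
apply/ffunP => t; rewrite ffunE /=.
rewrite -{2}(splitK t); case: (fintype.split t) => u /=; by rewrite ffunE.
Qed.

Lemma mono_split k q (b : {ffun 'I_(k + q) -> 'I_n}) :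
  mono b = mpoly.mnm_add (mono (Lf b)) (mono (Rf b)).
Proof.
apply/mnmP => i; rewrite monoE /mpoly.mnm_add mnmE !monoE big_split_ord /=.
by congr (_ + _)%N; apply: eq_bigr => t _; rewrite ffunE.
Qed.

Lemma Pol_prod k q (f : {ffun 'I_k -> 'I_n} -> R) (g : {ffun 'I_q -> 'I_n} -> R) :
  Pol (fun b => f (Lf b) * g (Rf b)) = Pol f * Pol g.
Proof.
rewrite /Pol mulr_suml.
rewrite [RHS](eq_bigr _ (fun i _ => mulr_sumr _ _ _ _)) [RHS]pair_bigA /=.
rewrite (reindex (@glue k q)) /=; last first.
  by exists (fun b => (Lf b, Rf b)) => [[a a'] _|b _];
     rewrite ?Lf_glue ?Rf_glue ?glueK.
apply: eq_bigr => p _.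
rewrite Lf_glue Rf_glue mono_split Lf_glue Rf_glue mpolyXD.
by rewrite -scalerAl -scalerAr scalerA.
Qed.

Lemma Pol_add r (f g : {ffun 'I_r -> 'I_n} -> R) :
  Pol (fun b => f b + g b) = Pol f + Pol g.
Proof. by rewrite /Pol -big_split /=; apply: eq_bigr => b _; rewrite scalerDl. Qed.

Lemma Pol0 r : Pol (fun _ : {ffun 'I_r -> 'I_n} => 0) = 0.
Proof. by rewrite /Pol big1 // => b _; rewrite scale0r. Qed.

Lemma natmul_eq0 (x : mpoly.mpoly n R) N : (0 < N)%N -> x *+ N = 0 -> x = 0.
Proof.
move=> N0 e; have : (N%:R^-1 : R) *: (x *+ N) = 0 by rewrite e scaler0.
by rewrite -scaler_nat scalerA mulVf ?scale1r // pnatr_eq0 -lt0n.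
Qed.

Lemma sym_cancel k (al de : {ffun 'I_k -> 'I_n} -> R) :
  (forall a s, al (fcomp a s) = al a) -> (forall a s, de (fcomp a s) = de a) ->
  (exists a, al a <> 0) ->
  (forall c : {ffun 'I_(k + k) -> 'I_n},
     \sum_(s : 'S_(k + k)) (de (Lf (fcomp c s)) * al (Rf (fcomp c s)) +
                           al (Lf (fcomp c s)) * de (Rf (fcomp c s))) = 0) ->
  forall a, de a = 0.
Proof.
move=> als des [a0 ha0] H.
have : Pol (fun c : {ffun 'I_(k + k) -> 'I_n} =>
   \sum_(s : 'S_(k + k)) (fun b => de (Lf b) * al (Rf b) + al (Lf b) * de (Rf b))
     (fcomp c s)) = 0.
  by rewrite -(Pol0 (k + k)); congr Pol; apply/funext => c; rewrite H.
rewrite (Pol_sym (fun b => de (Lf b) * al (Rf b) + al (Lf b) * de (Rf b))).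
rewrite Pol_add !Pol_prod => /natmul_eq0.
rewrite card_Sn fact_gt0 => /(_ isT) /eqP.
rewrite mulrC -mulr2n => /eqP /(@natmul_eq0 _ 2 isT) /eqP.
rewrite mulf_eq0 => /orP[|/eqP].
  move/eqP/Pol_inj => /(_ als a0); done.
by move/Pol_inj; apply.
Qed.

Definition upd r (a : {ffun 'I_r -> 'I_n}) (l : 'I_r) (m : 'I_n) : {ffun 'I_r -> 'I_n} :=
  [ffun t => if t == l then m else a t].

Definition Gterm (G : 'I_n -> 'I_n -> R) r (T : {ffun 'I_r -> 'I_n} -> R) (a : {ffun 'I_r -> 'I_n}) :=
  \sum_(l < r) \sum_(m < n) G m (a l) * T (upd a l m).

Lemma upd_fcomp r (c : {ffun 'I_r -> 'I_n}) (s : 'S_r) t m :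
  fcomp (upd c (s t) m) s = upd (fcomp c s) t m.
Proof. by apply/ffunP => u; rewrite !ffunE (inj_eq (@perm_inj _ s)). Qed.

Lemma Lf_updl k q (b : {ffun 'I_(k + q) -> 'I_n}) u m :
  Lf (upd b (lshift q u) m) = upd (Lf b) u m.
Proof. by apply/ffunP => t; rewrite !ffunE !eq_shift. Qed.
Lemma Rf_updl k q (b : {ffun 'I_(k + q) -> 'I_n}) u m :
  Rf (upd b (lshift q u) m) = Rf b.
Proof. by apply/ffunP => t; rewrite !ffunE !eq_shift. Qed.
Lemma Lf_updr k q (b : {ffun 'I_(k + q) -> 'I_n}) u m :
  Lf (upd b (rshift k u) m) = Lf b.
Proof. by apply/ffunP => t; rewrite !ffunE !eq_shift. Qed.
Lemma Rf_updr k q (b : {ffun 'I_(k + q) -> 'I_n}) u m :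
  Rf (upd b (rshift k u) m) = upd (Rf b) u m.
Proof. by apply/ffunP => t; rewrite !ffunE !eq_shift. Qed.

Lemma Gterm_sym (G : 'I_n -> 'I_n -> R) k (K : R) (al : {ffun 'I_k -> 'I_n} -> R) c :
  Gterm G (fun b => K * \sum_(s : 'S_(k + k)) al (Lf (fcomp b s)) * al (Rf (fcomp b s))) c
  = K * \sum_(s : 'S_(k + k))
      (Gterm G al (Lf (fcomp c s)) * al (Rf (fcomp c s)) +
       al (Lf (fcomp c s)) * Gterm G al (Rf (fcomp c s))).
Proof.
rewrite /Gterm.
under eq_bigr do under eq_bigr do rewrite mulrCA mulr_sumr.
under eq_bigr do rewrite -mulr_sumr.
rewrite -mulr_sumr; congr (_ * _).
under eq_bigr do rewrite exchange_big /=.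
rewrite exchange_big /=; apply: eq_bigr => s _.
rewrite (reindex_inj (@perm_inj _ s)) /= big_split_ord /=.
congr (_ + _).
  rewrite mulr_suml; apply: eq_bigr => u _; rewrite mulr_suml.
  apply: eq_bigr => m _; rewrite upd_fcomp Lf_updl Rf_updl.
  by rewrite [LHS]mulrA !ffunE.
rewrite mulr_sumr; apply: eq_bigr => u _; rewrite mulr_sumr.
apply: eq_bigr => m _; rewrite upd_fcomp Lf_updr Rf_updr.
by rewrite !ffunE mulrCA.
Qed.

Lemma Gterm_fcomp (G : 'I_n -> 'I_n -> R) r (al : {ffun 'I_r -> 'I_n} -> R) a s :
  (forall b, al (fcomp b s) = al b) -> Gterm G al (fcomp a s) = Gterm G al a.
Proof.
move=> als; rewrite /Gterm [RHS](reindex_inj (@perm_inj _ s)) /=.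
apply: eq_bigr => l _; apply: eq_bigr => m _.
by rewrite -upd_fcomp als ffunE.
Qed.
End Alg.

Import numFieldNormedType.Exports.
Section Ana.
Variable (R : realType).

Lemma is_derive_Ksum (V : normedModType R) (T : finType) (K : R)
  (h : T -> V -> R) x v :
  (forall s, derivable (h s) x v) ->
  is_derive x v (fun y => K * \sum_s h s y) (K * \sum_s 'D_v (h s) x).
Proof.
move=> dh.
suff S : forall l : seq T,
    is_derive x v (fun y => \sum_(s <- l) h s y) (\sum_(s <- l) 'D_v (h s) x).
  have := S (index_enum T) => ?.
  have -> : (fun y => K * \sum_s h s y) = K *: (fun y => \sum_s h s y).
    by apply/funext => y.
  exact: is_deriveZ.
elim=> [|s l IH].
  have -> : (fun y => \sum_(s <- [::]) h s y) = cst 0.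
    by apply/funext => y; rewrite big_nil.
  by rewrite big_nil; apply: is_derive_cst.
have -> : (fun y => \sum_(t <- s :: l) h t y) = h s + (fun y => \sum_(t <- l) h t y).
  by apply/funext => y; rewrite big_cons.
rewrite big_cons; apply: is_deriveD => //.
Qed.

End Ana.
Theorem mainTheorem5
  (R : realType) (M : topologicalType) (n k : nat) (I : Type)
  (dom : I -> set M) (phi : I -> M -> 'rV[R]_n) (psi : I -> 'rV[R]_n -> M)
  (Gam : I -> 'rV[R]_n -> 'I_n -> 'I_n -> 'I_n -> R)
  (A : I -> 'rV[R]_n -> {ffun 'I_k -> 'I_n} -> R) :
  hausdorff_space M ->
  C2_atlas dom phi psi ->
  koszul_connection dom phi psi Gam ->
  covtensor_field dom phi psi A -> C2_field dom phi A -> symmetric_field dom phi A ->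
  nowhere_zero dom phi A ->
  (forall i x, cimg dom phi i x -> forall j c,
      nabla Gam (Symm (tprod A A)) i x j c = 0) ->
  forall i x, cimg dom phi i x -> forall j a, nabla Gam A i x j a = 0.
Proof.
move=> _ [cover opens inv _ _] _ _ C2A symA nzA Hn i x hx j.
pose al := fun b => A i x b.
pose G := fun m b => Gam i x m j b.
pose K : R := ((k + k)`!%:R)^-1.
have dA : forall b, derivable (fun y => A i y b) x (ev R j).
  by move=> b; case: (C2A i b x hx) => _ /(_ j) [].
have als : forall b s, al (fcomp b s) = al b by move=> b s; exact: symA.
have nbx : \forall y \near x, cimg dom phi i y.
  by apply: open_nbhs_nbhs; split => //; exact: (opens i).2.
have des : forall b s, nabla Gam A i x j (fcomp b s) = nabla Gam A i x j b.
  move=> b s; rewrite /nabla; congr (_ - _).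
    rewrite /partial; apply: near_eq_derive; apply: filterS nbx => y hy.
    exact: symA.
  exact: (@Gterm_fcomp R n G k al b s (fun b' => als b' s)).
apply: (@sym_cancel R n k al (fun b => nabla Gam A i x j b)) => //.
  case: hx => p dp px; have [b hb] := nzA i p dp.
  by exists b; rewrite /al -px.
move=> c.
have H := Hn i x hx j c.
have E : nabla Gam (Symm (tprod A A)) i x j c =
  K * \sum_(s : 'S_(k + k))
     (nabla Gam A i x j (Lf (fcomp c s)) * al (Rf (fcomp c s)) +
      al (Lf (fcomp c s)) * nabla Gam A i x j (Rf (fcomp c s))).
  rewrite /nabla.
  have -> : \sum_(l < k + k) \sum_(m < n) Gam i x m j (c l) *
      Symm (tprod A A) i x [ffun t => if t == l then m else c t] =
      Gterm G (fun b => K * \sum_(s : 'S_(k + k))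
          al (Lf (fcomp b s)) * al (Rf (fcomp b s))) c by [].
  rewrite Gterm_sym.
  have -> : partial (fun y => Symm (tprod A A) i y c) j x =
     K * \sum_(s : 'S_(k + k))
       (A i x (Lf (fcomp c s)) * partial (fun y => A i y (Rf (fcomp c s))) j x +
        A i x (Rf (fcomp c s)) * partial (fun y => A i y (Lf (fcomp c s))) j x).
    rewrite /partial.
    have D := @is_derive_Ksum R _ _ K
       (fun s y => A i y (Lf (fcomp c s)) * A i y (Rf (fcomp c s))) x (ev R j)
       (fun s => derivableM (dA _) (dA _)).
    rewrite [LHS](@derive_val _ _ _ _ _ _ _ D); congr (_ * _).
    apply: eq_bigr => s _.
    exact: (deriveM (dA (Lf (fcomp c s))) (dA (Rf (fcomp c s)))).
  rewrite -mulrBr -sumrB; congr (_ * _); apply: eq_bigr => s _.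
  rewrite /Gterm /al /upd.
  rewrite /G !mulrBl !mulrBr; ring.
have : K * \sum_(s : 'S_(k + k))
     (nabla Gam A i x j (Lf (fcomp c s)) * al (Rf (fcomp c s)) +
      al (Lf (fcomp c s)) * nabla Gam A i x j (Rf (fcomp c s))) = 0 by rewrite -E.
move/eqP; rewrite mulf_eq0 invr_eq0 pnatr_eq0 (gtn_eqF (fact_gt0 _)) /=.
by move/eqP.
Qed.
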